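(* Let $f(x)=x^5+px^4+qx^3+rx^2+sx+t$ with real coefficients, and suppose $D=0$, $L_1=0$, $L_2\neq 0$ and $D_2=0$ (so $f$ has one triple root and two simple roots). Then the triple root of $f$ is $d=C_{2,1}/L_2$, and $f(y+d)=y^3\bigl(y^2+F_7y+F_6\bigr)$ where $F_7=p+5d$ and $F_6=q+4pd+10d^2$. If $L_2>0$ (all roots real), then: (a) if $F_6>0$ and $F_7<0$: triple $<$ single $<$ single; (b) if $F_6<0$: single $<$ triple $<$ single; (c) if $F_6>0$ and $F_7>0$: single $<$ single $<$ triple.
   Context: Let $\alpha_1,\dots,\alpha_5\in\mathbb{C}$ be the roots of $f$ listed with multiplicity. $D=\prod_{1\le i<j\le 5}(\alpha_i-\alpha_j)^2$ is the discriminant of $f$. $L_2=40qs-16p^2s-8rp^3+38rpq+3p^2q^2-12q^3-45r^2$. $L_1=-264ps^2r-12p^3tq^2+36r^3pq-124srpq^2+28srp^3q+260sptq-132p^2qrt+240pr^2t+234sqr^2+32p^4tr+48ptq^3-56sp^3t-80q^2rt+194qs^2p^2-600str-6q^3sp^2+2p^2q^2r^2-12sr^2p^2-54r^4+320s^3-8q^3r^2-8r^3p^3+250qt^2-176q^2s^2+24q^4s-36p^4s^2-100p^2t^2$. $D_2=24p^2q^4s-1100q^3rt+800p^3qst-1735p^2q^2rt-3p^2qr^2s+20pq^3rs-600p^2rst-1150pq^2st+5475pqr^2t-1380pqrs^2+1500qrst+6p^3qr^3+p^4q^2r^2-128p^6rt+660pq^4t-136p^5st-3p^4q^3s-236p^4qs^2+337p^2q^2s^2+48p^5q^2t-357p^3q^3t-12p^4r^2s-45pr^3s+60q^2r^2s-8p^2q^3r^2-500p^2qt^2-24pq^2r^3-1380p^3r^2t+408p^3rs^2-4p^5qrs+1028p^4qrt+11p^3q^2rs+36p^6s^2+100p^4t^2+9p^2r^4-48q^5s+16q^4r^2+160q^3s^2+625q^2t^2-3375r^3t+900r^2s^2$.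 $C_{2,1}=6sp^3+4q^2r-3pr^2-21spq+30sr+10p^2t-25tq-p^2rq$. *)

(* Defs.v *)
(* Complex numbers: an arbitrary numClosedFieldType C
   (algebraically closed, with the real subfield ordered); "real" = Num.real. *)
From HB Require Import structures.
From mathcomp Require Import all_boot all_order all_algebra.
Set Implicit Arguments. Unset Strict Implicit. Unset Printing Implicit Defensive.
Import Order.TTheory GRing.Theory Num.Theory.
Local Open Scope ring_scope.


Definition quintic (C : numClosedFieldType) (p q r s t : C) : {poly C} :=
  'X^5 + p%:P * 'X^4 + q%:P * 'X^3 + r%:P * 'X^2 + s%:P * 'X + t%:P.

Definition L2 (C : numClosedFieldType) (p q r s t : C) : C :=
  40 * q * s - 16 * p ^+ 2 * s - 8 * r * p ^+ 3 + 38 * r * p * q + 3 * p ^+ 2 * q ^+ 2 - 12 * q ^+ 3 - 45 * r ^+ 2.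

Definition L1 (C : numClosedFieldType) (p q r s t : C) : C :=
  - 264 * p * s ^+ 2 * r - 12 * p ^+ 3 * t * q ^+ 2 + 36 * r ^+ 3 * p * q - 124 * s * r * p * q ^+ 2 + 28 * s * r * p ^+ 3 * q
  + 260 * s * p * t * q - 132 * p ^+ 2 * q * r * t + 240 * p * r ^+ 2 * t + 234 * s * q * r ^+ 2 + 32 * p ^+ 4 * t * r
  + 48 * p * t * q ^+ 3 - 56 * s * p ^+ 3 * t - 80 * q ^+ 2 * r * t + 194 * q * s ^+ 2 * p ^+ 2 - 600 * s * t * r
  - 6 * q ^+ 3 * s * p ^+ 2 + 2 * p ^+ 2 * q ^+ 2 * r ^+ 2 - 12 * s * r ^+ 2 * p ^+ 2 - 54 * r ^+ 4 + 320 * s ^+ 3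
  - 8 * q ^+ 3 * r ^+ 2 - 8 * r ^+ 3 * p ^+ 3 + 250 * q * t ^+ 2 - 176 * q ^+ 2 * s ^+ 2 + 24 * q ^+ 4 * s
  - 36 * p ^+ 4 * s ^+ 2 - 100 * p ^+ 2 * t ^+ 2.

Definition D2 (C : numClosedFieldType) (p q r s t : C) : C :=
  24 * p ^+ 2 * q ^+ 4 * s - 1100 * q ^+ 3 * r * t + 800 * p ^+ 3 * q * s * t - 1735 * p ^+ 2 * q ^+ 2 * r * t
  - 3 * p ^+ 2 * q * r ^+ 2 * s + 20 * p * q ^+ 3 * r * s - 600 * p ^+ 2 * r * s * t - 1150 * p * q ^+ 2 * s * t
  + 5475 * p * q * r ^+ 2 * t - 1380 * p * q * r * s ^+ 2 + 1500 * q * r * s * t + 6 * p ^+ 3 * q * r ^+ 3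
  + p ^+ 4 * q ^+ 2 * r ^+ 2 - 128 * p ^+ 6 * r * t + 660 * p * q ^+ 4 * t - 136 * p ^+ 5 * s * t
  - 3 * p ^+ 4 * q ^+ 3 * s - 236 * p ^+ 4 * q * s ^+ 2 + 337 * p ^+ 2 * q ^+ 2 * s ^+ 2 + 48 * p ^+ 5 * q ^+ 2 * t
  - 357 * p ^+ 3 * q ^+ 3 * t - 12 * p ^+ 4 * r ^+ 2 * s - 45 * p * r ^+ 3 * s + 60 * q ^+ 2 * r ^+ 2 * s
  - 8 * p ^+ 2 * q ^+ 3 * r ^+ 2 - 500 * p ^+ 2 * q * t ^+ 2 - 24 * p * q ^+ 2 * r ^+ 3 - 1380 * p ^+ 3 * r ^+ 2 * t
  + 408 * p ^+ 3 * r * s ^+ 2 - 4 * p ^+ 5 * q * r * s + 1028 * p ^+ 4 * q * r * t + 11 * p ^+ 3 * q ^+ 2 * r * s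
  + 36 * p ^+ 6 * s ^+ 2 + 100 * p ^+ 4 * t ^+ 2 + 9 * p ^+ 2 * r ^+ 4 - 48 * q ^+ 5 * s + 16 * q ^+ 4 * r ^+ 2
  + 160 * q ^+ 3 * s ^+ 2 + 625 * q ^+ 2 * t ^+ 2 - 3375 * r ^+ 3 * t + 900 * r ^+ 2 * s ^+ 2.

Definition C21 (C : numClosedFieldType) (p q r s t : C) : C :=
  6 * s * p ^+ 3 + 4 * q ^+ 2 * r - 3 * p * r ^+ 2 - 21 * s * p * q + 30 * s * r + 10 * p ^+ 2 * t - 25 * t * q
  - p ^+ 2 * r * q.


Definition disc5 (C : numClosedFieldType) (alpha : 'I_5 -> C) : C :=
  \prod_(i < 5) \prod_(j < 5 | (i < j)%N) (alpha i - alpha j) ^+ 2.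

(* Main.v *)
Require Import Defs.
From HB Require Import structures.
From mathcomp Require Import all_boot all_order all_algebra.
From mathcomp Require Import ring fingroup perm.
Import Order.TTheory GRing.Theory Num.Theory.
Local Open Scope ring_scope.
Set Implicit Arguments. Unset Strict Implicit.

Lemma prod5 (C : numClosedFieldType) (F : 'I_5 -> {poly C}) :
  \prod_(k < 5) F k = F (inord 0) * F (inord 1) * F (inord 2) * F (inord 3) * F (inord 4).
Proof.
rewrite !big_ord_recl big_ord0 mulr1 !mulrA.
by congr (F _ * F _ * F _ * F _ * F _); apply: val_inj; rewrite /= ?inordK.
Qed.

Lemma reorder (C : numClosedFieldType) (alpha : 'I_5 -> C) (i j : 'I_5) :
  i != j -> alpha i = alpha j ->
  exists b0 b2 b3 b4 : C, \prod_(k < 5) ('X - (alpha k)%:P) =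
    ('X - b0%:P) * ('X - b0%:P) * ('X - b2%:P) * ('X - b3%:P) * ('X - b4%:P).
Proof.
move=> ij aij.
set k := tperm (inord 0) i j.
have h01 : (inord 0 : 'I_5) != inord 1 by rewrite -val_eqE /= !inordK.
have hk0 : (inord 0 : 'I_5) != k.
  apply/eqP => Hk; move/eqP: ij; apply.
  by rewrite -[j](tpermK (inord 0) i) -/k -Hk tpermL.
set sg := fun m => tperm (inord 0) i (tperm (inord 1) k m).
have sg_inj : injective sg.
  by move=> x y; rewrite /sg => /perm_inj /perm_inj.
rewrite (reindex_inj sg_inj) prod5.
have -> : sg (inord 0) = i.
  by rewrite /sg [tperm (inord 1) k _]tpermD ?tpermL // eq_sym.
have -> : sg (inord 1) = j by rewrite /sg tpermL /k tpermK.
by rewrite aij; exists (alpha j), (alpha (sg (inord 2))), (alpha (sg (inord 3))), (alpha (sg (inord 4))).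
Qed.
Lemma quintic_inj (C : numClosedFieldType) (p q r s t p' q' r' s' t' : C) :
  quintic p q r s t = quintic p' q' r' s' t' -> [/\ p = p', q = q', r = r', s = s' & t = t'].
Proof.
move=> H; have c k := congr1 (fun P : {poly C} => P`_k) H.
move: (c 4%N) (c 3%N) (c 2%N) (c 1%N) (c 0%N); rewrite /quintic !coefE /= !(mulr0, mulr1, addr0, add0r).
by move=> -> -> -> -> ->.
Qed.

Lemma expand5 (C : numClosedFieldType) (x1 x2 x3 x4 x5 : C) :
  ('X - x1%:P) * ('X - x2%:P) * ('X - x3%:P) * ('X - x4%:P) * ('X - x5%:P) =
  quintic (-(x1+x2+x3+x4+x5))
   (x1*x2+x1*x3+x1*x4+x1*x5+x2*x3+x2*x4+x2*x5+x3*x4+x3*x5+x4*x5)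
   (-(x1*x2*x3+x1*x2*x4+x1*x2*x5+x1*x3*x4+x1*x3*x5+x1*x4*x5+x2*x3*x4+x2*x3*x5+x2*x4*x5+x3*x4*x5))
   (x1*x2*x3*x4+x1*x2*x3*x5+x1*x2*x4*x5+x1*x3*x4*x5+x2*x3*x4*x5)
   (-(x1*x2*x3*x4*x5)).
Proof. rewrite /quintic. ring. Qed.

Lemma double_id (C : numClosedFieldType) (p q r s t a b c e : C) :
  quintic p q r s t = ('X - a%:P) * ('X - a%:P) * ('X - b%:P) * ('X - c%:P) * ('X - e%:P) ->
  L1 p q r s t = 2 * ((a-b)*(a-c)*(a-e)*(b-c)*(b-e)*(c-e))^+2.
Proof. rewrite expand5 => /quintic_inj [-> -> -> -> ->]; rewrite /L1; ring. Qed.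

Lemma dd_id (C : numClosedFieldType) (p q r s t a b e : C) :
  quintic p q r s t = ('X - a%:P) * ('X - a%:P) * ('X - b%:P) * ('X - b%:P) * ('X - e%:P) ->
  L2 p q r s t = 4 * ((a-b)*(a-e)*(b-e))^+2 /\
  D2 p q r s t = 4 * (a-b)^+6 * (a-e)^+4 * (b-e)^+4.
Proof. rewrite expand5 => /quintic_inj [-> -> -> -> ->]; rewrite /L2 /D2; split; ring. Qed.

Lemma triple_id (C : numClosedFieldType) (p q r s t a u v : C) :
  quintic p q r s t = ('X - a%:P) * ('X - a%:P) * ('X - a%:P) * ('X - u%:P) * ('X - v%:P) ->
  [/\ L2 p q r s t = 3 * ((u-v)*(a-u)*(a-v))^+2,
      C21 p q r s t = a * L2 p q r s t,
      p + 5 * a = 2 * a - u - v &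
      q + 4 * p * a + 10 * a ^+ 2 = (a - u) * (a - v)].
Proof. rewrite expand5 => /quintic_inj [-> -> -> -> ->]; rewrite /L2 /C21; split; ring. Qed.

Lemma dd_false (C : numClosedFieldType) (p q r s t a b e : C) :
  quintic p q r s t = ('X - a%:P) * ('X - a%:P) * ('X - b%:P) * ('X - b%:P) * ('X - e%:P) ->
  L2 p q r s t != 0 -> D2 p q r s t = 0 -> False.
Proof.
move=> /dd_id [-> ->] H /eqP; rewrite !mulf_eq0 pnatr_eq0 /=.
move: H; rewrite !mulf_eq0 pnatr_eq0 /=.
by case: (a - b == 0); case: (a - e == 0); case: (b - e == 0).
Qed.

Lemma exists_triple (C : numClosedFieldType) (p q r s t : C) (alpha : 'I_5 -> C) :
  quintic p q r s t = \prod_(i < 5) ('X - (alpha i)%:P) ->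
  disc5 alpha = 0 -> L1 p q r s t = 0 -> L2 p q r s t != 0 -> D2 p q r s t = 0 ->
  exists a u v : C, quintic p q r s t =
    ('X - a%:P) * ('X - a%:P) * ('X - a%:P) * ('X - u%:P) * ('X - v%:P).
Proof.
move=> Hq Hd HL1 HL2 HD2.
have [i [j [ij aij]]] : exists i j : 'I_5, i != j /\ alpha i = alpha j.
  move/eqP: Hd; rewrite /disc5 => /prodf_eq0 [i _ /prodf_eq0 [j lij]].
  rewrite expf_eq0 subr_eq0 => /andP [_ /eqP H].
  by exists i, j; split=> //; rewrite neq_ltn lij.
have [a [b [c [e Hf]]]] := reorder ij aij.
rewrite Hf in Hq.
have := double_id Hq; rewrite HL1 => /esym /eqP.
rewrite mulf_eq0 pnatr_eq0 /= expf_eq0 /= !mulf_eq0 !subr_eq0.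
case/orP=> [/orP [/orP [/orP [/orP [/eqP E|/eqP E]|/eqP E]|/eqP E]|/eqP E]|/eqP E].
- by exists a, c, e; rewrite Hq -E.
- by exists a, b, e; rewrite Hq -E; ring.
- by exists a, b, c; rewrite Hq -E; ring.
- by exfalso; apply: (@dd_false _ p q r s t a b e) => //; rewrite Hq -E.
- by exfalso; apply: (@dd_false _ p q r s t a b c) => //; rewrite Hq -E; ring.
- by exfalso; apply: (@dd_false _ p q r s t a c b) => //; rewrite Hq -E; ring.
Qed.

Ltac realtac := repeat (first [assumption | apply: rpredD | apply: rpredB | apply: rpredM | apply: rpredX | rewrite rpredN | apply: rpred_nat | apply: rpred1]).

Lemma sign_pp (C : numClosedFieldType) (x y : C) :
  x \is Num.real -> 0 < x * y -> 0 < x + y -> 0 < x /\ 0 < y.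
Proof.
move=> xR hxy hs; case: (real_ltgt0P xR) => [hx|hx|hx].
- by split=> //; rewrite -(pmulr_rgt0 y hx).
- rewrite nmulr_rgt0 // in hxy.
  by have := lt_trans hs (ltr_nwDl hx (ltW hxy)); rewrite ltxx.
- by rewrite hx mul0r ltxx in hxy.
Qed.

Lemma sign_n (C : numClosedFieldType) (x y : C) :
  x \is Num.real -> x * y < 0 -> (x < 0 /\ 0 < y) \/ (y < 0 /\ 0 < x).
Proof.
move=> xR hxy; case: (real_ltgt0P xR) => [hx|hx|hx].
- by rewrite pmulr_rlt0 // in hxy; right.
- by rewrite nmulr_rlt0 // in hxy; left.
- by rewrite hx mul0r ltxx in hxy.
Qed.

Unset Implicit Arguments. Set Strict Implicit.

Theorem mainTheorem10 (C : numClosedFieldType) (p q r s t : C)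
  (alpha : 'I_5 -> C) :
  p \is Num.real -> q \is Num.real -> r \is Num.real ->
  s \is Num.real -> t \is Num.real ->
  quintic p q r s t = \prod_(i < 5) ('X - (alpha i)%:P) ->
  disc5 alpha = 0 -> L1 p q r s t = 0 -> L2 p q r s t != 0 ->
  D2 p q r s t = 0 ->
  let d := C21 p q r s t / L2 p q r s t in
  let F7 := p + 5 * d in
  let F6 := q + 4 * p * d + 10 * d ^+ 2 in
  [/\ #|[set i : 'I_5 | alpha i == d]| = 3%N,
      quintic p q r s t \Po ('X + d%:P) = 'X^3 * ('X^2 + F7%:P * 'X + F6%:P)
    & 0 < L2 p q r s t ->
      [/\ forall i, alpha i \is Num.real,
          0 < F6 -> F7 < 0 ->
            exists u v : C, [/\ d < u, u < v &
              quintic p q r s t = ('X - d%:P) ^+ 3 * ('X - u%:P) * ('X - v%:P)],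
          F6 < 0 ->
            exists u v : C, [/\ u < d, d < v &
              quintic p q r s t = ('X - d%:P) ^+ 3 * ('X - u%:P) * ('X - v%:P)]
        & 0 < F6 -> 0 < F7 ->
            exists u v : C, [/\ u < v, v < d &
              quintic p q r s t = ('X - d%:P) ^+ 3 * ('X - u%:P) * ('X - v%:P)]]].
Proof.
move=> pR qR rR sR tR Hq Hd HL1 HL2 HD2.
have [a [u [v Ht]]] := exists_triple Hq Hd HL1 HL2 HD2.
have [EL2 EC EF7 EF6] := triple_id Ht.
have [uv au av] : [/\ u != v, a != u & a != v].
  move: HL2; rewrite EL2 !mulf_eq0 pnatr_eq0 /= !subr_eq0.
  by case: (u == v); case: (a == u); case: (a == v).
have da : C21 p q r s t / L2 p q r s t = a by rewrite EC mulfK.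
cbv zeta; rewrite da EF7 EF6.
have Ht3 : quintic p q r s t = ('X - a%:P) ^+ 3 * ('X - u%:P) * ('X - v%:P).
  by rewrite Ht !exprS expr0 mulr1 !mulrA.
have Pmap : \prod_(i < 5) ('X - (alpha i)%:P) =
    \prod_(y <- map alpha (enum 'I_5)) ('X - y%:P) by rewrite big_map big_enum.
split.
- have -> : #|[set i | alpha i == a]| = count_mem a (map alpha (enum 'I_5)).
    rewrite enumT count_map cardsE cardE /enum_mem size_filter.
    by apply: eq_count => i; rewrite !inE.
  rewrite -mu_prod_XsubC -Pmap -Hq Ht3.
  rewrite mupMl ?root_XsubC // mupMl ?root_XsubC //.
  by rewrite mup_XsubCX eqxx.
- rewrite Ht !comp_polyM !comp_polyB comp_polyX !comp_polyC.
  ring.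
move=> L2pos.
have aR : a \is Num.real.
  rewrite -da rpredM //; last rewrite rpredV.
    by rewrite /C21; realtac.
  by rewrite /L2; realtac.
have SR : u + v \is Num.real.
  have -> : u + v = 2 * a - (p + 5 * a) by rewrite EF7; ring.
  by realtac.
have F6R : (a - u) * (a - v) \is Num.real.
  by rewrite -EF6; realtac.
have F6n0 : (a - u) * (a - v) != 0 by rewrite mulf_neq0 // subr_eq0.
have F6sq : 0 < ((a - u) * (a - v)) ^+ 2.
  case: (real_ltgt0P F6R) => [h|h|h].
  - by rewrite expr2 mulr_gt0.
  - by rewrite expr2 nmulr_rgt0.
  - by rewrite h eqxx in F6n0.
have dR : u - v \is Num.real.
  rewrite realEsqr.
  have -> : (u - v) ^+ 2 = L2 p q r s t / (3 * ((a - u) * (a - v)) ^+ 2).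
    rewrite EL2; field.
    by rewrite !subr_eq0 av au.
  by rewrite ltW // divr_gt0 // mulr_gt0 // ltr0n.
have uR : u \is Num.real.
  have -> : u = ((u + v) + (u - v)) / 2 by field.
  apply: rpredM; first exact: rpredD SR dR.
  by rewrite rpredV rpred_nat.
have vR : v \is Num.real.
  have -> : v = (u + v) - u by ring.
  by rewrite rpredB.
have xR : u - a \is Num.real by rewrite rpredB.
have yR : v - a \is Num.real by rewrite rpredB.
have EF6' : (a - u) * (a - v) = (u - a) * (v - a) by ring.
have EF7' : 2 * a - u - v = - ((u - a) + (v - a)) by ring.
split.
- move=> i.
  have : root (quintic p q r s t) (alpha i).
    by rewrite Hq Pmap root_prod_XsubC map_f // mem_enum.
  rewrite Ht !rootM !root_XsubC.
  by case/orP=> [/orP [/orP [/orP [/eqP->|/eqP->]|/eqP->]|/eqP->]|/eqP->].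
- rewrite EF6' EF7' oppr_lt0 => h1 h2.
  have [hx hy] := sign_pp xR h1 h2.
  rewrite subr_gt0 in hx; rewrite subr_gt0 in hy.
  case: (real_ltgtP uR vR) => [h|h|h].
  + by exists u, v.
  + by exists v, u; split=> //; rewrite Ht3 -!mulrA [_ * ('X - v%:P)]mulrC.
  + by rewrite h eqxx in uv.
- rewrite EF6' => h1.
  case: (sign_n xR h1) => [[hx hy]|[hy hx]];
    rewrite ?subr_lt0 ?subr_gt0 in hx hy.
  + by exists u, v.
  + by exists v, u; split=> //; rewrite Ht3 -!mulrA [_ * ('X - v%:P)]mulrC.
- rewrite EF6' EF7' oppr_gt0 => h1 h2.
  have h1' : 0 < - (u - a) * - (v - a) by rewrite mulrNN.
  have h2' : 0 < - (u - a) + - (v - a) by rewrite -opprD oppr_gt0.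
  have nxR : - (u - a) \is Num.real by rewrite rpredN.
  have [hx hy] := sign_pp nxR h1' h2'.
  rewrite oppr_gt0 subr_lt0 in hx; rewrite oppr_gt0 subr_lt0 in hy.
  case: (real_ltgtP uR vR) => [h|h|h].
  + by exists u, v.
  + by exists v, u; split=> //; rewrite Ht3 -!mulrA [_ * ('X - v%:P)]mulrC.
  + by rewrite h eqxx in uv.
Qed.
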